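(* Let $\varepsilon_1>0$. For a dataset $D=\{(x_i,y_i)\}_{i=1}^n$ with $x_i,y_i\in[0,1]$, let $S_{x^2}=\sum_i x_i^2$, $S_{x-x^2}=\sum_i (x_i-x_i^2)$, $S_{1-x}=\sum_i(1-x_i)$, and let $Z_{11},Z_{12},Z_{13}$ be i.i.d. $\mathrm{Lap}(1/\varepsilon_1)$ random variables. Then the randomized mechanism releasing $(\tilde S_{x^2},\tilde S_{x-x^2},\tilde S_{1-x})=(S_{x^2}+Z_{11},\,S_{x-x^2}+Z_{12},\,S_{1-x}+Z_{13})$ satisfies $\varepsilon_1$-differential privacy.
   Context: $\mathrm{Lap}(b)$ denotes the zero-mean Laplace distribution with density $\frac{1}{2b}e^{-|z|/b}$. Two datasets are neighboring ($D\sim D'$) if one is obtained from the other by adding or removing a single record in $[0,1]^2$. A randomized mechanism $\mathcal{M}$ satisfies $\varepsilon$-differential privacy (pure DP) if for all neighboring $D\sim D'$ and all measurable sets $S$ of outputs, $\Pr[\mathcal{M}(D)\in S]\le e^{\varepsilon}\Pr[\mathcal{M}(D')\in S]$. *)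

(* Defs.v *)
From HB Require Import structures.
From mathcomp Require Import all_boot all_order all_algebra.
From mathcomp Require Import all_classical all_reals all_analysis.
Set Implicit Arguments. Unset Strict Implicit. Unset Printing Implicit Defensive.
Import Order.TTheory GRing.Theory Num.Theory.
Local Open Scope ring_scope.
Local Open Scope classical_set_scope.

(* A record is a pair (x, y); a dataset is a finite list of records,
   considered up to permutation (a multiset). *)
Definition record (R : realType) := (R * R)%type.
Definition dataset (R : realType) := seq (record R).

Definition in_unit_square (R : realType) (r : record R) : bool :=
  (0 <= r.1 <= 1) && (0 <= r.2 <= 1).

Definition valid_dataset (R : realType) (D : dataset R) : Prop :=
  all (@in_unit_square R) D.

Definition add_one (R : realType) (D D' : dataset R) : Prop :=
  exists r : record R, in_unit_square r /\ perm_eq D' (r :: D).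

Definition neighboring (R : realType) (D D' : dataset R) : Prop :=
  valid_dataset D /\ valid_dataset D' /\ (add_one D D' \/ add_one D' D).

Definition S_x2 (R : realType) (D : dataset R) : R := \sum_(r <- D) r.1 ^+ 2.
Definition S_x_x2 (R : realType) (D : dataset R) : R := \sum_(r <- D) (r.1 - r.1 ^+ 2).
Definition S_1_x (R : realType) (D : dataset R) : R := \sum_(r <- D) (1 - r.1).

Definition lap_pdf (R : realType) (b z : R) : R := (2 * b)^-1 * expR (- `|z| / b).

Definition leb3 (R : realType) :=
  ((@lebesgue_measure R \x @lebesgue_measure R) \x @lebesgue_measure R)%E.

(* Output law of the mechanism M(D) = (S_x2 D + Z11, S_x_x2 D + Z12, S_1_x D + Z13)
   with Z11, Z12, Z13 i.i.d. Lap(1/eps1): its joint density is the product of the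
   three shifted Laplace densities. *)
Definition mech_prob (R : realType) (eps1 : R) (D : dataset R)
    (S : set ((R * R) * R)) : \bar R :=
  (\int[@leb3 R]_(z in S)
     (lap_pdf (1 / eps1) (z.1.1 - S_x2 D) *
      lap_pdf (1 / eps1) (z.1.2 - S_x_x2 D) *
      lap_pdf (1 / eps1) (z.2 - S_1_x D))%:E)%E.

Definition pure_DP (R : realType) (eps : R)
    (P : dataset R -> set ((R * R) * R) -> \bar R) : Prop :=
  forall D D' : dataset R, neighboring D D' ->
  forall S : set ((R * R) * R), measurable S ->
    (P D S <= (expR eps)%:E * P D' S)%E.

(* Main.v *)
Require Import Defs.
From HB Require Import structures.
From mathcomp Require Import all_boot all_order all_algebra.
From mathcomp Require Import all_classical all_reals all_analysis.
From mathcomp Require Import measurable_realfun.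
From mathcomp Require Import ring lra.
Import Order.TTheory GRing.Theory Num.Theory.
Local Open Scope ring_scope.

Lemma mM d (T : measurableType d) (R : realType) (D : set T) (f g : T -> R) :
  measurable_fun D f -> measurable_fun D g -> measurable_fun D (fun x => f x * g x).
Proof. exact: measurable_funM. Qed.

Lemma lap_meas {R : realType} (b s : R) :
  measurable_fun setT (fun t : R => lap_pdf b (t - s)).
Proof.
rewrite /lap_pdf.
apply: mM => //.
apply: measurableT_comp => //.
apply: mM => //.
apply: measurableT_comp => //.
apply: measurableT_comp => //.
exact: measurable_funB.
Qed.

Lemma lap_shift {R : realType} (eps s s' z : R) : 0 < eps ->
  lap_pdf (1 / eps) (z - s) <= expR (eps * `|s - s'|) * lap_pdf (1/eps) (z - s').
Proof.
move=> e0; rewrite /lap_pdf [leRHS]mulrCA; apply: ler_wpM2l.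
  by rewrite invr_ge0 mulr_ge0 // divr_ge0 // ltW.
rewrite -expRD ler_expR !div1r !invrK.
have := ler_normD (z - s) (s - s').
have -> : z - s + (s - s') = z - s' by rewrite addrA subrK.
nra.
Qed.

Lemma lap_ge0 {R : realType} (eps t : R) : 0 < eps -> 0 <= lap_pdf (1 / eps) t.
Proof.
move=> e0; rewrite /lap_pdf mulr_ge0 ?expR_ge0 // invr_ge0 mulr_ge0 // divr_ge0 // ltW //.

Qed.

Definition dens (R : realType) (eps a b c : R) (z : (R * R) * R) : R :=
  lap_pdf (1 / eps) (z.1.1 - a) * lap_pdf (1 / eps) (z.1.2 - b) *
  lap_pdf (1 / eps) (z.2 - c).
Arguments dens {R}.

Lemma dens_meas (R : realType) (eps a b c : R) :
  measurable_fun setT (dens eps a b c).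
Proof.
rewrite /dens; apply: mM; first apply: mM.
- apply: (measurableT_comp (lap_meas _ _)).
  exact: (measurableT_comp measurable_fst measurable_fst).
- apply: (measurableT_comp (lap_meas _ _)).
  exact: (measurableT_comp measurable_snd measurable_fst).
- exact: (measurableT_comp (lap_meas _ _) measurable_snd).
Qed.

Lemma dens_shift (R : realType) (eps a b c a' b' c' : R) z : 0 < eps ->
  `|a - a'| + `|b - b'| + `|c - c'| <= 1 ->
  dens eps a b c z <= expR eps * dens eps a' b' c' z.
Proof.
move=> e0 hs; rewrite /dens.
have h1 := @lap_shift _ eps a a' (z.1.1) e0.
have h2 := @lap_shift _ eps b b' (z.1.2) e0.
have h3 := @lap_shift _ eps c c' (z.2) e0.
set l1 := lap_pdf _ (z.1.1 - a) in h1 *.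
set l2 := lap_pdf _ (z.1.2 - b) in h2 *.
set l3 := lap_pdf _ (z.2 - c) in h3 *.
set m1 := lap_pdf _ (z.1.1 - a') in h1 *.
set m2 := lap_pdf _ (z.1.2 - b') in h2 *.
set m3 := lap_pdf _ (z.2 - c') in h3 *.
have l10 : 0 <= l1 by exact: lap_ge0.
have l20 : 0 <= l2 by exact: lap_ge0.
have l30 : 0 <= l3 by exact: lap_ge0.
have m10 : 0 <= m1 by exact: lap_ge0.
have m20 : 0 <= m2 by exact: lap_ge0.
have m30 : 0 <= m3 by exact: lap_ge0.
have m0 : 0 <= m1 * m2 * m3 by do 2 apply: mulr_ge0 => //.
apply: (le_trans (y := expR (eps * `|a - a'|) * m1 * (expR (eps * `|b - b'|) * m2) * (expR (eps * `|c - c'|) * m3))).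
  apply: ler_pM => //; first exact: mulr_ge0.
  exact: ler_pM.
have -> : expR (eps * `|a - a'|) * m1 * (expR (eps * `|b - b'|) * m2) * (expR (eps * `|c - c'|) * m3)
  = expR (eps * (`|a - a'| + `|b - b'| + `|c - c'|)) * (m1 * m2 * m3).
  rewrite !mulrDr !expRD; ring.
apply: ler_wpM2r => //; rewrite ler_expR.
by rewrite -[leRHS]mulr1 ler_wpM2l // ltW.
Qed.

Lemma stats_perm {R : realType} {D D' : dataset R} {r : record R} :
  perm_eq D' (r :: D) ->
  [/\ S_x2 D' = r.1 ^+ 2 + S_x2 D, S_x_x2 D' = (r.1 - r.1 ^+ 2) + S_x_x2 D
    & S_1_x D' = (1 - r.1) + S_1_x D].
Proof.
move=> hp; rewrite /S_x2 /S_x_x2 /S_1_x !(perm_big _ hp) !big_cons; split => //.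
Qed.

Lemma sens_bound {R : realType} {x : R} : 0 <= x <= 1 ->
  `|x ^+ 2| + `|x - x ^+ 2| + `|1 - x| <= 1.
Proof.
case/andP=> h0 h1.
rewrite !ger0_norm ?subr_ge0 ?sqr_ge0 //; first by lra.

by rewrite expr2; nra.
Qed.

Lemma dens_nb {R : realType} (eps : R) (D D' : dataset R) z : 0 < eps ->
  neighboring D D' ->
  dens eps (S_x2 D) (S_x_x2 D) (S_1_x D) z <=
  expR eps * dens eps (S_x2 D') (S_x_x2 D') (S_1_x D') z.
Proof.
move=> e0 [_ [_ H]]; apply: dens_shift => //.
have e1 : forall a d : R, a - (d + a) = - d by move=> *; ring.
have e2 : forall a d : R, (d + a) - a = d by move=> *; ring.
case: H => [[r [hr hp]]|[r [hr hp]]]; have [-> -> ->] := stats_perm hp;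
  move: hr => /andP[hx _]; have := sens_bound hx.
- by rewrite !e1 !normrN.
- by rewrite !e2.
Qed.

Theorem mainTheorem3 (R : realType) (eps1 : R) (heps1 : 0 < eps1) :
  pure_DP eps1 (@mech_prob R eps1).
Proof.
move=> D D' hn S mS.
have key := fun z => @dens_nb R eps1 D D' z heps1 hn.
have mf : forall a b c : R, measurable_fun S (fun z => (dens eps1 a b c z)%:E).
  move=> a b c; apply/measurable_EFinP.
  apply: (measurable_funS measurableT) => //; exact: dens_meas.
have f0 : forall a b c z, S z -> (0 <= (dens eps1 a b c z)%:E)%E.
  move=> a b c z _; rewrite lee_fin /dens.
  by apply: mulr_ge0; [apply: mulr_ge0|]; exact: lap_ge0.
rewrite /mech_prob.
change ((\int[@leb3 R]_(z in S) (dens eps1 (S_x2 D) (S_x_x2 D) (S_1_x D) z)%:E <=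
  (expR eps1)%:E * \int[@leb3 R]_(z in S) (dens eps1 (S_x2 D') (S_x_x2 D') (S_1_x D') z)%:E)%E).
rewrite -ge0_integralZl_EFin //. all: try exact: expR_ge0. all: try exact: mf. all: try (move=> z Sz; exact: f0).
apply: ge0_le_integral => //.
all: try exact: mf.
all: try (move=> z Sz; exact: f0).
- under eq_fun do rewrite -EFinM.
  apply/measurable_EFinP.
  apply: (measurable_funS measurableT) => //.
  apply: mM => //; exact: dens_meas.
- by move=> z _; rewrite -EFinM lee_fin.
Qed.
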